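(* Let $\Omega\subseteq\mathbb{R}^2$ be a compact domain, $r_d>0$, $a_I>0$, $a_h>0$, $a_v>0$, and let $c_r>0$ be a collision radius. Consider $N$ vehicles with dynamics $\dot p_i=v_i$, $\dot v_i=u_i$ and control law (applied without thresholding) $$u_i=-\sum_{j\neq i}\nabla_i V_I(p_{ij})-\nabla_i V_h(p_i)-a_v v_i.$$ Let $$\Phi=\frac12\sum_{i=1}^N\Bigl(\dot p_i\cdot\dot p_i+\sum_{j\ne i}V_I(p_{ij})+2V_h(p_i)\Bigr).$$ If the initial configuration satisfies $$\Phi(0)<\int_{r_d}^{c_r}f_I(s)\,ds=\frac{a_I}{2}(c_r-r_d)^2,$$ then no vehicle collision occurs for any $t\ge0$, i.e., $\|p_i(t)-p_j(t)\|>c_r$ for all $i\neq j$ and all $t\ge 0$.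
   Context: $p_{ij}:=p_i-p_j$; $P_{\partial\Omega}(x)$ is the closest point of $\partial\Omega$ to $x$ and the signed distance of $x$ from $\partial\Omega$ is positive outside $\Omega$, negative inside. $f_I(r)=a_I(r-r_d)$ for $0\le r<r_d$ and $f_I(r)=0$ for $r\ge r_d$. $V_I(x)=\frac{a_I}{2}(\|x\|-r_d)^2$ for $\|x\|<r_d$, $V_I(x)=0$ otherwise; $V_h(x)=0$ if the signed distance of $x$ to $\partial\Omega$ is $\le -\frac{r_d}{2}$ and $V_h(x)=\frac{a_h}{2}(\text{signed distance}+\frac{r_d}{2})^2$ otherwise. A collision between vehicles $i$ and $j$ means $\|p_i-p_j\|\le c_r$. *)

(* Defs.v *)
From Stdlib Require Import Reals Lra List ClassicalDescription.
From Coquelicot Require Import Coquelicot.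
Open Scope R_scope.

Definition pt := (R * R)%type.
Definition vadd (x y : pt) : pt := (fst x + fst y, snd x + snd y).
Definition vopp (x : pt) : pt := (- fst x, - snd x).
Definition vsub (x y : pt) : pt := vadd x (vopp y).
Definition vscal (a : R) (x : pt) : pt := (a * fst x, a * snd x).
Definition vzero : pt := (0, 0).
Definition dot (x y : pt) : R := fst x * fst y + snd x * snd y.
Definition norm2 (x : pt) : R := sqrt (dot x x).

Definition in_ball (c : pt) (e : R) (x : pt) : Prop := norm2 (vsub x c) < e.
Definition open_set (U : pt -> Prop) : Prop :=
  forall x, U x -> exists e, 0 < e /\ forall y, in_ball x e y -> U y.
Definition closed_set (S : pt -> Prop) : Prop := open_set (fun x => ~ S x).
Definition bounded_set (S : pt -> Prop) : Prop :=
  exists M, forall x, S x -> norm2 x <= M.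
Definition interior (S : pt -> Prop) (x : pt) : Prop :=
  exists e, 0 < e /\ forall y, in_ball x e y -> S y.
Definition boundary (S : pt -> Prop) (x : pt) : Prop :=
  forall e, 0 < e ->
    (exists y, in_ball x e y /\ S y) /\ (exists y, in_ball x e y /\ ~ S y).
Definition connected_open (U : pt -> Prop) : Prop :=
  forall A B : pt -> Prop, open_set A -> open_set B ->
    (forall x, U x <-> A x \/ B x) -> (forall x, ~ (A x /\ B x)) ->
    (forall x, ~ A x) \/ (forall x, ~ B x).

Definition compact_domain (Om : pt -> Prop) : Prop :=
  closed_set Om /\ bounded_set Om /\
  (exists x, interior Om x) /\ connected_open (interior Om) /\
  (forall x, Om x -> forall e, 0 < e -> exists y, in_ball x e y /\ interior Om y).

Definition dist_set (S : pt -> Prop) (x : pt) : R :=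
  real (Glb_Rbar (fun r => exists y, S y /\ r = norm2 (vsub x y))).
Definition signed_dist (Om : pt -> Prop) (x : pt) : R :=
  if excluded_middle_informative (Om x)
  then - dist_set (boundary Om) x
  else dist_set (boundary Om) x.

Definition f_I (a_I r_d r : R) : R := if Rlt_dec r r_d then a_I * (r - r_d) else 0.
Definition V_I (a_I r_d : R) (x : pt) : R :=
  if Rlt_dec (norm2 x) r_d then a_I / 2 * (norm2 x - r_d) ^ 2 else 0.
Definition V_h (Om : pt -> Prop) (a_h r_d : R) (x : pt) : R :=
  if Rle_dec (signed_dist Om x) (- (r_d / 2)) then 0
  else a_h / 2 * (signed_dist Om x + r_d / 2) ^ 2.

Definition is_grad (V : pt -> R) (x g : pt) : Prop :=
  forall eps, 0 < eps -> exists delta, 0 < delta /\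
    forall h, norm2 h < delta ->
      Rabs (V (vadd x h) - V x - dot g h) <= eps * norm2 h.

Definition curve_deriv (c : R -> pt) (t : R) (d : pt) : Prop :=
  derivable_pt_lim (fun s => fst (c s)) t (fst d) /\
  derivable_pt_lim (fun s => snd (c s)) t (snd d).

Definition cont_nonneg (c : R -> pt) : Prop :=
  forall t, 0 <= t -> forall eps, 0 < eps -> exists delta, 0 < delta /\
    forall s, 0 <= s -> Rabs (s - t) < delta -> norm2 (vsub (c s) (c t)) < eps.

Definition sumR_ne (N i : nat) (F : nat -> R) : R :=
  fold_right (fun j acc => (if Nat.eq_dec j i then 0 else F j) + acc) 0 (seq 0 N).
Definition sumR (N : nat) (F : nat -> R) : R :=
  fold_right (fun j acc => F j + acc) 0 (seq 0 N).
Definition sumV_ne (N i : nat) (F : nat -> pt) : pt :=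
  fold_right (fun j acc => vadd (if Nat.eq_dec j i then vzero else F j) acc) vzero (seq 0 N).

(** The energy Phi(t) (with dp_i/dt = v_i) *)
Definition Phi (Om : pt -> Prop) (a_I a_h r_d : R) (N : nat)
    (p v : nat -> R -> pt) (t : R) : R :=
  / 2 * sumR N (fun i =>
     dot (v i t) (v i t)
     + sumR_ne N i (fun j => V_I a_I r_d (vsub (p i t) (p j t)))
     + 2 * V_h Om a_h r_d (p i t)).

(* Main.v *)
Require Import Defs.
From Stdlib Require Import Reals List Lra Lia Psatz Classical IndefiniteDescription ClassicalDescription.
From Coquelicot Require Import Coquelicot.
Open Scope R_scope.

Lemma dot_ge0 x : 0 <= dot x x.
Proof. destruct x; unfold dot; simpl; nra. Qed.

Lemma norm2_ge0 x : 0 <= norm2 x.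
Proof. apply sqrt_pos. Qed.

Lemma norm2_sq x : norm2 x * norm2 x = dot x x.
Proof. unfold norm2; apply sqrt_sqrt, dot_ge0. Qed.

Lemma norm2_fst x : Rabs (fst x) <= norm2 x.
Proof. destruct x as [a b]; unfold norm2, dot; simpl.
  rewrite <- sqrt_Rsqr_abs; apply sqrt_le_1; unfold Rsqr; nra. Qed.

Lemma norm2_snd x : Rabs (snd x) <= norm2 x.
Proof. destruct x as [a b]; unfold norm2, dot; simpl.
  rewrite <- sqrt_Rsqr_abs; apply sqrt_le_1; unfold Rsqr; nra. Qed.

Lemma norm2_le_sum x : norm2 x <= Rabs (fst x) + Rabs (snd x).
Proof. destruct x as [a b]; unfold norm2, dot; simpl.
  rewrite <- (sqrt_Rsqr (Rabs a + Rabs b)) by (pose proof (Rabs_pos a); pose proof (Rabs_pos b); lra).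
  pose proof (Rabs_pos a); pose proof (Rabs_pos b).
  apply sqrt_le_1; unfold Rsqr; try nra.
  assert (a * a = Rabs a * Rabs a) by (rewrite <- Rabs_mult; rewrite Rabs_right; nra).
  assert (b * b = Rabs b * Rabs b) by (rewrite <- Rabs_mult; rewrite Rabs_right; nra).
  nra. Qed.

Lemma norm2_axis a : norm2 (a, 0) = Rabs a.
Proof. unfold norm2, dot; simpl. rewrite <- sqrt_Rsqr_abs; f_equal; unfold Rsqr; ring. Qed.
Lemma norm2_axis2 a : norm2 (0, a) = Rabs a.
Proof. unfold norm2, dot; simpl. rewrite <- sqrt_Rsqr_abs; f_equal; unfold Rsqr; ring. Qed.

Lemma norm2_triang a b : norm2 (vadd a b) <= norm2 a + norm2 b.
Proof.
  pose proof (norm2_sq a); pose proof (norm2_sq b); pose proof (norm2_ge0 a); pose proof (norm2_ge0 b).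
  assert (CS : dot a b <= norm2 a * norm2 b).
  { destruct (Rle_dec (dot a b) 0) as [Hle|Hgt]. nra.
    assert (dot a b * dot a b <= (norm2 a * norm2 b) * (norm2 a * norm2 b)).
    { replace ((norm2 a * norm2 b) * (norm2 a * norm2 b)) with (dot a a * dot b b) by (rewrite <- H, <- H0; ring).
      clear -a b; destruct a as [a1 a2], b as [b1 b2]; unfold dot; simpl.
      pose proof (Rle_0_sqr (a1*b2 - a2*b1)); unfold Rsqr in *; nra. }
    apply Rnot_le_lt in Hgt. pose proof (Rmult_le_pos _ _ H1 H2). nra. }
  unfold norm2 at 1.
  rewrite <- (sqrt_Rsqr (norm2 a + norm2 b)) by lra.
  apply sqrt_le_1. apply dot_ge0. unfold Rsqr; nra.
  unfold Rsqr. replace (dot (vadd a b) (vadd a b)) with (dot a a + dot b b + 2 * dot a b)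
    by (destruct a, b; unfold dot, vadd; simpl; ring). nra.
Qed.

Lemma norm2_opp a : norm2 (vopp a) = norm2 a.
Proof. unfold norm2; f_equal; destruct a; unfold dot, vopp; simpl; ring. Qed.

Lemma vsub_sym x y : norm2 (vsub x y) = norm2 (vsub y x).
Proof. unfold norm2; f_equal; destruct x, y; unfold dot, vsub, vadd, vopp; simpl; ring. Qed.

Lemma vsub_triang x y z : norm2 (vsub x z) <= norm2 (vsub x y) + norm2 (vsub y z).
Proof.
  replace (vsub x z) with (vadd (vsub x y) (vsub y z)).
  apply norm2_triang.
  destruct x, y, z; unfold vsub, vadd, vopp; simpl; f_equal; ring.
Qed.


Lemma glb_finite (E : R -> Prop) : (exists r, E r) -> (forall r, E r -> 0 <= r) ->
  exists m, Glb_Rbar E = Finite m /\ 0 <= m /\ (forall r, E r -> m <= r) /\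
    (forall eps, 0 < eps -> exists r, E r /\ r < m + eps).
Proof.
  intros [r0 Hr0] Hpos.
  destruct (Glb_Rbar_correct E) as [Hlb Hgr].
  destruct (Glb_Rbar E) as [m| |] eqn:Em.
  - exists m. split; [reflexivity|]. split.
    + assert (Rbar_le 0 m). { apply Hgr. intros x Hx. simpl. now apply Hpos. } simpl in H; lra.
    + split. intros r Hr. specialize (Hlb r Hr). simpl in Hlb. lra.
      intros eps Heps. apply NNPP. intro Hn.
      assert (Rbar_le (m + eps) m). { apply Hgr. intros x Hx. simpl.
        destruct (Rle_dec (m+eps) x); auto. exfalso; apply Hn; exists x; split; auto; lra. }
      simpl in H; lra.
  - specialize (Hlb r0 Hr0). simpl in Hlb. contradiction.
  - assert (Rbar_le 0 m_infty). { apply Hgr. intros x Hx. simpl. now apply Hpos. } simpl in H; contradiction.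
Qed.

Lemma dist_ge0 S x : 0 <= dist_set S x.
Proof.
  unfold dist_set.
  destruct (classic (exists y, S y)) as [[y Hy]|Hn].
  - destruct (glb_finite (fun r => exists y, S y /\ r = norm2 (vsub x y))) as [m [E [H0 _]]].
    exists (norm2 (vsub x y)); eauto.
    intros r [z [_ ->]]; apply norm2_ge0.
    rewrite E; simpl; lra.
  - destruct (Glb_Rbar_correct (fun r => exists y, S y /\ r = norm2 (vsub x y))) as [_ Hgr].
    assert (Rbar_le p_infty (Glb_Rbar (fun r => exists y, S y /\ r = norm2 (vsub x y)))).
    { apply Hgr. intros r [z [Hz _]]. exfalso; apply Hn; eauto. }
    destruct (Glb_Rbar _); simpl in *; try contradiction; lra.
Qed.

Lemma dist_le S x z : S z -> dist_set S x <= norm2 (vsub x z).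
Proof.
  intro Hz. unfold dist_set.
  destruct (glb_finite (fun r => exists y, S y /\ r = norm2 (vsub x y))) as [m [E [H0 [H1 _]]]].
  exists (norm2 (vsub x z)); eauto.
  intros r [y [_ ->]]; apply norm2_ge0.
  rewrite E; simpl. apply H1; eauto.
Qed.

Lemma dist_approx S x : (exists y, S y) -> forall eps, 0 < eps ->
  exists z, S z /\ norm2 (vsub x z) < dist_set S x + eps.
Proof.
  intros [y Hy] eps Heps. unfold dist_set.
  destruct (glb_finite (fun r => exists y, S y /\ r = norm2 (vsub x y))) as [m [E [H0 [H1 H2]]]].
  exists (norm2 (vsub x y)); eauto.
  intros r [w [_ ->]]; apply norm2_ge0.
  rewrite E; simpl. destruct (H2 eps Heps) as [r [[z [Hz ->]] Hr]]. eauto.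
Qed.

Lemma dist_lip S x y : Rabs (dist_set S x - dist_set S y) <= norm2 (vsub x y).
Proof.
  destruct (classic (exists z, S z)) as [Hne|Hn].
  - assert (K : forall a b, dist_set S a <= dist_set S b + norm2 (vsub a b)).
    { intros a b. apply Rnot_lt_le; intro Hlt.
      set (e := dist_set S a - dist_set S b - norm2 (vsub a b)).
      destruct (dist_approx S b Hne e) as [z [Hz Hb]]. unfold e; lra.
      pose proof (dist_le S a z Hz). pose proof (vsub_triang a b z). unfold e in Hb. lra. }
    pose proof (K x y); pose proof (K y x). rewrite (vsub_sym y x) in H0.
    apply Rabs_le; lra.
  - assert (forall a, dist_set S a = 0).
    { intro a. unfold dist_set.
      destruct (Glb_Rbar_correct (fun r => exists y, S y /\ r = norm2 (vsub a y))) as [_ Hgr].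
      assert (Rbar_le p_infty (Glb_Rbar (fun r => exists y, S y /\ r = norm2 (vsub a y)))).
      { apply Hgr. intros r [z [Hz _]]. exfalso; apply Hn; eauto. }
      destruct (Glb_Rbar _); simpl in *; try contradiction; reflexivity. }
    rewrite !H, Rminus_0_r, Rabs_R0. apply norm2_ge0.
Qed.

Lemma vsub_self x : norm2 (vsub x x) = 0.
Proof. unfold norm2, dot, vsub, vadd, vopp; simpl. replace (_ + _) with 0 by ring. apply sqrt_0. Qed.

Lemma sd_cont Om x0 : forall eps, 0 < eps -> exists delta, 0 < delta /\
  forall y, norm2 (vsub y x0) < delta -> Rabs (signed_dist Om y - signed_dist Om x0) < eps.
Proof.
  intros eps Heps.
  destruct (classic (boundary Om x0)) as [Hb|Hnb].
  - exists eps; split; auto. intros y Hy.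
    assert (D0 : dist_set (boundary Om) x0 = 0).
    { pose proof (dist_le _ x0 x0 Hb). rewrite vsub_self in H. pose proof (dist_ge0 (boundary Om) x0). lra. }
    pose proof (dist_le _ y x0 Hb). pose proof (dist_ge0 (boundary Om) y).
    unfold signed_dist; rewrite D0.
    destruct (excluded_middle_informative (Om x0)); destruct (excluded_middle_informative (Om y));
    rewrite ?Ropp_0, Rminus_0_r; [rewrite Rabs_Ropp| |rewrite Rabs_Ropp|]; rewrite Rabs_right; lra.
  - unfold boundary in Hnb. apply not_all_ex_not in Hnb as [e He].
    apply imply_to_and in He as [He Hn].
    assert (Hc : forall y, in_ball x0 e y -> (Om y <-> Om x0)).
    { intros y Hy. apply not_and_or in Hn. destruct Hn as [Hn|Hn].
      - assert (forall w, in_ball x0 e w -> ~ Om w) by (intros w Hw Hw'; apply Hn; eauto).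
        assert (~ Om x0). { apply H. unfold in_ball. rewrite vsub_self; auto. }
        split; intro; exfalso; [apply (H y)|]; auto.
      - assert (forall w, in_ball x0 e w -> Om w) by (intros w Hw; apply NNPP; intro; apply Hn; eauto).
        assert (Om x0). { apply H. unfold in_ball. rewrite vsub_self; auto. }
        split; auto. }
    exists (Rmin e eps); split. apply Rmin_pos; auto.
    intros y Hy.
    assert (Hy1 : in_ball x0 e y). { unfold in_ball. pose proof (Rmin_l e eps). lra. }
    pose proof (Rmin_r e eps).
    pose proof (dist_lip (boundary Om) y x0).
    specialize (Hc y Hy1).
    unfold signed_dist.
    destruct (excluded_middle_informative (Om x0)); destruct (excluded_middle_informative (Om y)); try tauto.
    + replace (- dist_set (boundary Om) y - - dist_set (boundary Om) x0) with
        (- (dist_set (boundary Om) y - dist_set (boundary Om) x0)) by ring.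
      rewrite Rabs_Ropp; lra.
    + lra.
Qed.


Lemma grad_unique V x g1 g2 : is_grad V x g1 -> is_grad V x g2 -> g1 = g2.
Proof.
  intros H1 H2.
  assert (K : forall u, norm2 u = 1 -> forall eps, 0 < eps -> Rabs (dot g1 u - dot g2 u) <= 2 * eps).
  { intros u Hu eps Heps.
    destruct (H1 eps Heps) as [d1 [Hd1 P1]]. destruct (H2 eps Heps) as [d2 [Hd2 P2]].
    set (s := Rmin d1 d2 / 2).
    assert (Hs : 0 < s) by (unfold s; pose proof (Rmin_pos _ _ Hd1 Hd2); lra).
    assert (Hn : norm2 (vscal s u) = s).
    { unfold norm2 in *. replace (dot (vscal s u) (vscal s u)) with (s*s * dot u u)
        by (destruct u; unfold dot, vscal; simpl; ring).
      rewrite sqrt_mult_alt, Hu. rewrite sqrt_square; lra. nra. }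
    assert (norm2 (vscal s u) < d1) by (rewrite Hn; unfold s; pose proof (Rmin_l d1 d2); lra).
    assert (norm2 (vscal s u) < d2) by (rewrite Hn; unfold s; pose proof (Rmin_r d1 d2); lra).
    specialize (P1 _ H). specialize (P2 _ H0). rewrite Hn in P1, P2.
    replace (dot g1 (vscal s u)) with (s * dot g1 u) in P1 by (destruct u, g1; unfold dot, vscal; simpl; ring).
    replace (dot g2 (vscal s u)) with (s * dot g2 u) in P2 by (destruct u, g2; unfold dot, vscal; simpl; ring).
    set (A := V (vadd x (vscal s u)) - V x) in *.
    apply Rabs_le_between in P1; apply Rabs_le_between in P2.
    apply Rabs_le; destruct P1, P2; split;
    apply (Rmult_le_reg_l s); auto; nra. }
  assert (Z : forall u, norm2 u = 1 -> dot g1 u = dot g2 u).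
  { intros u Hu. apply NNPP; intro Hne.
    set (e := Rabs (dot g1 u - dot g2 u) / 4).
    assert (0 < Rabs (dot g1 u - dot g2 u)) by (apply Rabs_pos_lt; lra).
    specialize (K u Hu e ltac:(unfold e; lra)). unfold e in K; lra. }
  pose proof (Z (1,0) ltac:(rewrite norm2_axis; apply Rabs_R1)).
  pose proof (Z (0,1) ltac:(rewrite norm2_axis2; apply Rabs_R1)).
  destruct g1, g2; unfold dot in *; simpl in *. f_equal; lra.
Qed.

Lemma VI_opp a r x : V_I a r (vopp x) = V_I a r x.
Proof. unfold V_I. rewrite norm2_opp. reflexivity. Qed.

Lemma grad_VI_opp a r x g : is_grad (V_I a r) x g -> is_grad (V_I a r) (vopp x) (vopp g).
Proof.
  intros H eps Heps. destruct (H eps Heps) as [d [Hd P]]. exists d; split; auto.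
  intros h Hh. rewrite <- norm2_opp in Hh. specialize (P _ Hh).
  rewrite <- (VI_opp a r (vadd (vopp x) h)), <- (VI_opp a r (vopp x)).
  replace (vopp (vadd (vopp x) h)) with (vadd x (vopp h)) by (destruct x, h; unfold vopp, vadd; simpl; f_equal; ring).
  replace (vopp (vopp x)) with x by (destruct x; unfold vopp; simpl; f_equal; ring).
  replace (dot (vopp g) h) with (dot g (vopp h)) by (destruct g, h; unfold dot, vopp; simpl; ring).
  rewrite norm2_opp in P. exact P.
Qed.

Lemma chain V c t d g : curve_deriv c t d -> is_grad V (c t) g ->
  derivable_pt_lim (fun s => V (c s)) t (dot g d).
Proof.
  intros [D1 D2] G eps Heps.
  set (K := Rabs (fst d) + Rabs (snd d) + 2).
  set (M := Rabs (fst g) + Rabs (snd g) + 1).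
  assert (HK : 0 < K) by (unfold K; pose proof (Rabs_pos (fst d)); pose proof (Rabs_pos (snd d)); lra).
  assert (HM : 0 < M) by (unfold M; pose proof (Rabs_pos (fst g)); pose proof (Rabs_pos (snd g)); lra).
  destruct (G (eps / (2 * K))) as [d0 [Hd0 P]]. apply Rdiv_lt_0_compat; lra.
  set (e2 := Rmin 1 (eps / (2 * M))).
  assert (He2 : 0 < e2) by (apply Rmin_pos; [lra| apply Rdiv_lt_0_compat; lra]).
  destruct (D1 e2 He2) as [a1 A1]. destruct (D2 e2 He2) as [a2 A2].
  assert (Hdl : 0 < Rmin (Rmin a1 a2) (d0 / K)).
  { apply Rmin_pos. apply Rmin_pos; apply cond_pos. apply Rdiv_lt_0_compat; lra. }
  exists (mkposreal _ Hdl). intros h Hh0 Hh. simpl in Hh.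
  pose proof (Rmin_l (Rmin a1 a2) (d0 / K)). pose proof (Rmin_r (Rmin a1 a2) (d0/K)).
  pose proof (Rmin_l a1 a2). pose proof (Rmin_r a1 a2).
  specialize (A1 h Hh0 ltac:(lra)). specialize (A2 h Hh0 ltac:(lra)).
  set (q1 := (fst (c (t + h)) - fst (c t)) / h) in *.
  set (q2 := (snd (c (t + h)) - snd (c t)) / h) in *.
  set (Dl := vsub (c (t + h)) (c t)).
  assert (E1 : fst Dl = q1 * h) by (unfold Dl, q1, vsub, vadd, vopp; simpl; field; auto).
  assert (E2 : snd Dl = q2 * h) by (unfold Dl, q2, vsub, vadd, vopp; simpl; field; auto).
  assert (Ec : c (t + h) = vadd (c t) Dl) by (unfold Dl; destruct (c (t+h)), (c t); unfold vadd, vsub, vopp; simpl; f_equal; ring).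
  pose proof (Rmin_l 1 (eps / (2 * M))) as Q1. pose proof (Rmin_r 1 (eps / (2 * M))) as Q2. fold e2 in Q1, Q2.
  assert (Bq : Rabs q1 + Rabs q2 <= K).
  { unfold K. pose proof (Rabs_triang_inv q1 (fst d)). pose proof (Rabs_triang_inv q2 (snd d)). lra. }
  assert (ND : norm2 Dl <= K * Rabs h).
  { pose proof (norm2_le_sum Dl). rewrite E1, E2, !Rabs_mult in H3.
    pose proof (Rabs_pos h). nra. }
  assert (Hhp : 0 < Rabs h) by (apply Rabs_pos_lt; auto).
  assert (ND2 : norm2 Dl < d0).
  { assert (K * Rabs h < d0). { apply (Rmult_lt_reg_r (/K)). apply Rinv_0_lt_compat; lra.
      replace (K * Rabs h * / K) with (Rabs h) by (field; lra). unfold Rdiv in H0. lra. }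
    lra. }
  specialize (P Dl ND2). rewrite <- Ec in P.
  set (Er := V (c (t + h)) - V (c t) - dot g Dl) in *.
  replace ((V (c (t + h)) - V (c t)) / h - dot g d) with
    (Er / h + (fst g * (q1 - fst d) + snd g * (q2 - snd d))).
  2:{ unfold Er. replace (dot g Dl) with (fst g * (q1 * h) + snd g * (q2 * h))
        by (rewrite <- E1, <- E2; destruct g; unfold dot; simpl; ring).
      destruct g, d; unfold dot; simpl. field; auto. }
  eapply Rle_lt_trans. apply Rabs_triang.
  assert (T1 : Rabs (Er / h) <= eps / 2).
  { unfold Rdiv. rewrite Rabs_mult, Rabs_inv.
    apply (Rmult_le_reg_r (Rabs h)); auto.
    rewrite Rmult_assoc, Rinv_l by lra.
    apply Rle_trans with (eps / (2 * K) * norm2 Dl). lra.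
    apply Rle_trans with (eps / (2*K) * (K * Rabs h)).
    apply Rmult_le_compat_l; auto. left; apply Rdiv_lt_0_compat; lra.
    right; field; lra. }
  assert (T2 : Rabs (fst g * (q1 - fst d) + snd g * (q2 - snd d)) < eps / 2).
  { eapply Rle_lt_trans. apply Rabs_triang. rewrite !Rabs_mult.
    pose proof (Rabs_pos (fst g)); pose proof (Rabs_pos (snd g)).
    apply Rle_lt_trans with ((Rabs (fst g) + Rabs (snd g)) * e2).
    { assert (Rabs (fst g) * Rabs (q1 - fst d) <= Rabs (fst g) * e2) by (apply Rmult_le_compat_l; lra).
      assert (Rabs (snd g) * Rabs (q2 - snd d) <= Rabs (snd g) * e2) by (apply Rmult_le_compat_l; lra).
      lra. }
    apply Rle_lt_trans with ((M - 1) * (eps / (2 * M))).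
    apply Rmult_le_compat; try lra; unfold M; lra.
    apply (Rmult_lt_reg_r (2 * M)). lra. unfold Rdiv.
    replace ((M - 1) * (eps * / (2 * M)) * (2 * M)) with ((M-1)*eps) by (field; lra).
    replace (eps * / 2 * (2 * M)) with (M * eps) by (field; lra). lra. }
  lra.
Qed.


Definition sumL (l : list nat) (F : nat -> R) : R := fold_right (fun j acc => F j + acc) 0 l.

Lemma sumL_ext l F G : (forall j, In j l -> F j = G j) -> sumL l F = sumL l G.
Proof. induction l; simpl; intros; auto. rewrite H, IHl; auto. Qed.

Lemma sumL_plus l F G : sumL l (fun j => F j + G j) = sumL l F + sumL l G.
Proof. induction l; simpl; try ring. rewrite IHl; ring. Qed.

Lemma sumL_minus l F G : sumL l (fun j => F j - G j) = sumL l F - sumL l G.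
Proof. induction l; simpl; try ring. rewrite IHl; ring. Qed.

Lemma sumL_scal l c F : sumL l (fun j => c * F j) = c * sumL l F.
Proof. induction l; simpl; try ring. rewrite IHl; ring. Qed.

Lemma sumL_opp l F : sumL l (fun j => - F j) = - sumL l F.
Proof. induction l; simpl; try ring. rewrite IHl; ring. Qed.

Lemma sumL_zero l : sumL l (fun _ => 0) = 0.
Proof. induction l; simpl; try ring. rewrite IHl; ring. Qed.

Lemma sumL_swap l1 l2 F : sumL l1 (fun i => sumL l2 (fun j => F i j)) = sumL l2 (fun j => sumL l1 (fun i => F i j)).
Proof.
  induction l1; simpl. symmetry; apply sumL_zero.
  rewrite IHl1. rewrite <- sumL_plus. reflexivity.
Qed.

Lemma sumL_nonneg l F : (forall j, In j l -> 0 <= F j) -> 0 <= sumL l F.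
Proof. induction l; simpl; intros; try lra. pose proof (H a (or_introl eq_refl)). pose proof (IHl (fun j Hj => H j (or_intror Hj))). lra. Qed.

Lemma sumL_ge_one l F i : (forall j, In j l -> 0 <= F j) -> In i l -> F i <= sumL l F.
Proof.
  induction l; simpl; intros H Hi; [contradiction|].
  destruct Hi as [<-|Hi].
  - pose proof (sumL_nonneg l F (fun j Hj => H j (or_intror Hj))). lra.
  - pose proof (H a (or_introl eq_refl)). pose proof (IHl (fun j Hj => H j (or_intror Hj)) Hi). lra.
Qed.

Lemma sumL_ge_two l F i j : NoDup l -> (forall k, In k l -> 0 <= F k) -> In i l -> In j l -> i <> j ->
  F i + F j <= sumL l F.
Proof.
  induction l; simpl; intros Hnd H Hi Hj Hij; [contradiction|].
  inversion Hnd; subst.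
  assert (H' : forall k, In k l -> 0 <= F k) by (intros; apply H; auto).
  destruct Hi as [<-|Hi]; destruct Hj as [<-|Hj].
  - congruence.
  - pose proof (sumL_ge_one l F j H' Hj). lra.
  - pose proof (sumL_ge_one l F i H' Hi). lra.
  - pose proof (H a (or_introl eq_refl)). pose proof (IHl H3 H' Hi Hj Hij). lra.
Qed.

Lemma sumL_deriv l (F : nat -> R -> R) (D : nat -> R) t :
  (forall j, In j l -> derivable_pt_lim (F j) t (D j)) ->
  derivable_pt_lim (fun s => sumL l (fun j => F j s)) t (sumL l D).
Proof.
  induction l; simpl; intros H.
  - apply derivable_pt_lim_const.
  - apply (derivable_pt_lim_plus (F a) (fun s => sumL l (fun j => F j s))); auto.
Qed.

Lemma sumL_cont l (F : nat -> R -> R) x :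
  (forall j, In j l -> continuity_pt (F j) x) ->
  continuity_pt (fun s => sumL l (fun j => F j s)) x.
Proof.
  induction l; simpl; intros H.
  - apply continuity_pt_const. intros a b; reflexivity.
  - apply (continuity_pt_plus (F a) (fun s => sumL l (fun j => F j s))); auto.
Qed.

Definition sumVL (l : list nat) (i : nat) (F : nat -> pt) : pt :=
  fold_right (fun j acc => vadd (if Nat.eq_dec j i then vzero else F j) acc) vzero l.

Lemma dot_sumV l i a G : dot a (sumVL l i G) = sumL l (fun j => if Nat.eq_dec j i then 0 else dot a (G j)).
Proof.
  induction l; simpl. unfold dot, vzero; simpl; ring.
  rewrite <- IHl. destruct (Nat.eq_dec a0 i); destruct a, (sumVL l i G); try destruct (G a0); unfold dot, vadd, vzero; simpl; ring.
Qed.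


Lemma dpl_eq f t l1 l2 : derivable_pt_lim f t l1 -> l1 = l2 -> derivable_pt_lim f t l2.
Proof. intros H ->; exact H. Qed.

Lemma dot_deriv c t d : curve_deriv c t d ->
  derivable_pt_lim (fun s => dot (c s) (c s)) t (2 * dot (c t) d).
Proof.
  intros [D1 D2]. unfold dot.
  eapply dpl_eq.
  apply (derivable_pt_lim_plus (fun s => fst (c s) * fst (c s)) (fun s => snd (c s) * snd (c s)));
  apply (derivable_pt_lim_mult (fun s => fst (c s)) (fun s => fst (c s))) ||
  apply (derivable_pt_lim_mult (fun s => snd (c s)) (fun s => snd (c s))); eauto.
  ring.
Qed.

Lemma curve_deriv_sub c1 c2 t d1 d2 : curve_deriv c1 t d1 -> curve_deriv c2 t d2 ->
  curve_deriv (fun s => vsub (c1 s) (c2 s)) t (vsub d1 d2).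
Proof.
  intros [A1 A2] [B1 B2]. split; simpl.
  - apply (derivable_pt_lim_minus (fun s => fst (c1 s)) (fun s => fst (c2 s))); auto.
  - apply (derivable_pt_lim_minus (fun s => snd (c1 s)) (fun s => snd (c2 s))); auto.
Qed.


Lemma Phi_deriv (Om : pt -> Prop) (r_d a_I a_h a_v : R) (N : nat) (p v : nat -> R -> pt) t : 0 < a_v -> 0 < t ->
  (forall i, (i < N)%nat ->
     curve_deriv (p i) t (v i t) /\
     exists (gI : nat -> pt) (gh : pt),
       (forall j, (j < N)%nat -> j <> i ->
          is_grad (V_I a_I r_d) (vsub (p i t) (p j t)) (gI j)) /\
       is_grad (V_h Om a_h r_d) (p i t) gh /\
       curve_deriv (v i) t
         (vsub (vsub (vopp (sumV_ne N i gI)) gh) (vscal a_v (v i t)))) ->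
  exists D, derivable_pt_lim (Phi Om a_I a_h r_d N p v) t D /\ D <= 0.
Proof.
  intros Hav Ht Hdyn.
  assert (Hch : forall i, exists y : (nat -> pt) * pt, (i < N)%nat ->
     (forall j, (j < N)%nat -> j <> i ->
          is_grad (V_I a_I r_d) (vsub (p i t) (p j t)) (fst y j)) /\
       is_grad (V_h Om a_h r_d) (p i t) (snd y) /\
       curve_deriv (v i) t
         (vsub (vsub (vopp (sumV_ne N i (fst y))) (snd y)) (vscal a_v (v i t)))).
  { intro i. destruct (Compare_dec.lt_dec i N) as [Hi|Hi].
    - destruct (Hdyn i Hi) as [_ [gI [gh H]]]. exists (gI, gh); intros _; exact H.
    - exists ((fun _ => vzero), vzero); intros; contradiction. }
  apply functional_choice in Hch as [ch Hch].
  set (GI := fun i => fst (ch i)). set (GH := fun i => snd (ch i)).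
  set (l := seq 0 N).
  assert (Inl : forall j, In j l -> (j < N)%nat) by (intros j Hj; apply in_seq in Hj; lia).
  set (vv := fun i => vsub (vsub (vopp (sumV_ne N i (GI i))) (GH i)) (vscal a_v (v i t))).
  assert (Anti : forall i j, (i < N)%nat -> (j < N)%nat -> i <> j -> GI j i = vopp (GI i j)).
  { intros i j Hi Hj Hij.
    destruct (Hch i Hi) as [Gi _]. destruct (Hch j Hj) as [Gj _].
    specialize (Gi j Hj (not_eq_sym Hij)). specialize (Gj i Hi Hij).
    apply grad_VI_opp in Gi.
    replace (vopp (vsub (p i t) (p j t))) with (vsub (p j t) (p i t)) in Gi
      by (destruct (p i t), (p j t); unfold vopp, vsub, vadd; simpl; f_equal; ring).
    exact (grad_unique _ _ _ _ Gj Gi). }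
  set (D := / 2 * sumL l (fun i => 2 * dot (v i t) (vv i)
        + sumL l (fun j => if Nat.eq_dec j i then 0 else dot (GI i j) (vsub (v i t) (v j t)))
        + 2 * dot (GH i) (v i t))).
  exists D. split.
  - unfold Phi, D.
    apply (derivable_pt_lim_scal (fun s => sumR N (fun i =>
     dot (v i s) (v i s)
     + sumR_ne N i (fun j => V_I a_I r_d (vsub (p i s) (p j s)))
     + 2 * V_h Om a_h r_d (p i s)))).
    apply (sumL_deriv l (fun i s => dot (v i s) (v i s)
     + sumR_ne N i (fun j => V_I a_I r_d (vsub (p i s) (p j s)))
     + 2 * V_h Om a_h r_d (p i s))).
    intros i Hil. pose proof (Inl i Hil) as Hi.
    destruct (Hdyn i Hi) as [Dp _]. destruct (Hch i Hi) as [Gi [Gh Dv]].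
    apply (derivable_pt_lim_plus (fun s => dot (v i s) (v i s)
     + sumR_ne N i (fun j => V_I a_I r_d (vsub (p i s) (p j s)))) (fun s => 2 * V_h Om a_h r_d (p i s))).
    apply (derivable_pt_lim_plus (fun s => dot (v i s) (v i s))
     (fun s => sumR_ne N i (fun j => V_I a_I r_d (vsub (p i s) (p j s))))).
    + apply dot_deriv. exact Dv.
    + apply (sumL_deriv l (fun j s => if Nat.eq_dec j i then 0 else V_I a_I r_d (vsub (p i s) (p j s)))).
      intros j Hjl. destruct (Nat.eq_dec j i) as [e|ne].
      * apply derivable_pt_lim_const.
      * apply (chain (V_I a_I r_d) (fun s => vsub (p i s) (p j s))).
        apply curve_deriv_sub; auto. apply (Hdyn j (Inl j Hjl)).
        apply Gi; auto.
    + apply (derivable_pt_lim_scal (fun s => V_h Om a_h r_d (p i s))).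
      apply (chain (V_h Om a_h r_d) (p i)); auto.
  - set (P := fun i j => if Nat.eq_dec j i then 0 else dot (GI i j) (v i t)).
    set (Q := fun i j => if Nat.eq_dec j i then 0 else dot (GI i j) (v j t)).
    assert (E1 : D = / 2 * sumL l (fun i => -2 * a_v * dot (v i t) (v i t) - sumL l (P i) - sumL l (Q i))).
    { unfold D. f_equal. apply sumL_ext. intros i Hil.
      unfold vv. 
      replace (dot (v i t) (vsub (vsub (vopp (sumV_ne N i (GI i))) (GH i)) (vscal a_v (v i t))))
        with (- dot (v i t) (sumVL l i (GI i)) - dot (v i t) (GH i) - a_v * dot (v i t) (v i t)).
      2:{ change (sumV_ne N i (GI i)) with (sumVL l i (GI i)).
          destruct (v i t), (sumVL l i (GI i)), (GH i); unfold dot, vsub, vadd, vopp, vscal; simpl; ring. }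
      rewrite dot_sumV.
      rewrite (sumL_ext l (fun j => if Nat.eq_dec j i then 0 else dot (GI i j) (vsub (v i t) (v j t)))
                (fun j => P i j - Q i j)).
      2:{ intros j _. unfold P, Q. destruct (Nat.eq_dec j i). ring.
          destruct (GI i j), (v i t), (v j t); unfold dot, vsub, vadd, vopp; simpl; ring. }
      rewrite (sumL_ext l (fun j => if Nat.eq_dec j i then 0 else dot (v i t) (GI i j)) (P i)).
      2:{ intros j _. unfold P. destruct (Nat.eq_dec j i). ring.
          destruct (GI i j), (v i t); unfold dot; simpl; ring. }
      rewrite sumL_minus.
      replace (dot (GH i) (v i t)) with (dot (v i t) (GH i)) by (destruct (GH i), (v i t); unfold dot; simpl; ring).
      ring. }
    assert (E2 : sumL l (fun i => sumL l (Q i)) = - sumL l (fun i => sumL l (P i))).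
    { unfold Q. rewrite sumL_swap. rewrite <- sumL_opp. apply sumL_ext. intros j Hjl.
      rewrite <- sumL_opp. apply sumL_ext. intros i Hil. unfold P.
      destruct (Nat.eq_dec j i) as [e|ne]; destruct (Nat.eq_dec i j); try (subst; congruence); try ring.
      rewrite (Anti j i (Inl j Hjl) (Inl i Hil) ne).
      destruct (GI j i), (v j t); unfold dot, vopp; simpl; ring. }
    rewrite E1, !sumL_minus, E2.
    assert (0 <= sumL l (fun i => dot (v i t) (v i t))) by (apply sumL_nonneg; intros; apply dot_ge0).
    rewrite sumL_scal.
    nra.
Qed.


Lemma hcont k c s x : continuity_pt (fun r => k * ((r + c + s * Rabs (r + c)) / 2) ^ 2) x.
Proof.
  assert (A : continuity_pt (fun r => r + c) x) by reg.
  assert (B : continuity_pt (fun r => Rabs (r + c)) x).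
  { apply (continuity_pt_comp (fun r => r + c) Rabs); auto. apply Rcontinuity_abs. }
  assert (C : continuity_pt (fun r => (r + c + s * Rabs (r + c)) / 2) x).
  { unfold Rdiv. apply (continuity_pt_mult (fun r => r + c + s * Rabs (r + c)) (fun _ => /2)).
    apply (continuity_pt_plus (fun r => r + c) (fun r => s * Rabs (r + c))); auto.
    apply (continuity_pt_scal (fun r => Rabs (r + c))); auto.
    apply continuity_pt_const; intros ? ?; reflexivity. }
  apply (continuity_pt_mult (fun _ => k) (fun r => ((r + c + s * Rabs (r + c)) / 2) ^ 2)).
  apply continuity_pt_const; intros ? ?; reflexivity.
  apply (continuity_pt_comp (fun r => (r + c + s * Rabs (r + c)) / 2) (fun y => y ^ 2)); auto.
  reg.
Qed.

Definition pcont (F : pt -> R) (x : pt) := forall eps, 0 < eps -> exists delta, 0 < delta /\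
  forall y, norm2 (vsub y x) < delta -> Rabs (F y - F x) < eps.

Lemma cont_gen c F : cont_nonneg c -> pcont F (c 0) ->
  continuity_pt (fun s => F (c (Rmax 0 s))) 0.
Proof.
  intros Hc HF eps Heps.
  destruct (HF eps Heps) as [d1 [Hd1 P1]].
  destruct (Hc 0 (Rle_refl 0) d1 Hd1) as [d2 [Hd2 P2]].
  exists d2; split; auto. intros x [_ Hx]. simpl in *. unfold R_dist in *.
  rewrite (Rmax_left 0 0) by lra.
  apply P1. apply P2. apply Rmax_l.
  unfold Rmax; destruct (Rle_dec 0 x); rewrite Rminus_0_r in *; try lra.
  rewrite Rabs_R0; lra.
Qed.

Lemma lip_pcont F x : (forall y, Rabs (F y - F x) <= norm2 (vsub y x)) -> pcont F x.
Proof. intros H eps Heps. exists eps; split; auto. intros y Hy. specialize (H y). lra. Qed.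

Lemma pcont_fst x : pcont fst x.
Proof. apply lip_pcont. intro y. replace (fst y - fst x) with (fst (vsub y x)) by (simpl; ring). apply norm2_fst. Qed.
Lemma pcont_snd x : pcont snd x.
Proof. apply lip_pcont. intro y. replace (snd y - snd x) with (snd (vsub y x)) by (simpl; ring). apply norm2_snd. Qed.
Lemma pcont_norm x : pcont norm2 x.
Proof. apply lip_pcont. intro y. apply Rabs_le. split.
  - pose proof (norm2_triang (vsub x y) y).
    replace (vadd (vsub x y) y) with x in H by (destruct x, y; unfold vsub, vadd, vopp; simpl; f_equal; ring).
    rewrite vsub_sym in H. lra.
  - pose proof (norm2_triang (vsub y x) x).
    replace (vadd (vsub y x) x) with y in H by (destruct x, y; unfold vsub, vadd, vopp; simpl; f_equal; ring).
    lra.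
Qed.

Lemma cont_nonneg_sub c1 c2 : cont_nonneg c1 -> cont_nonneg c2 -> cont_nonneg (fun s => vsub (c1 s) (c2 s)).
Proof.
  intros H1 H2 t Ht eps Heps.
  destruct (H1 t Ht (eps/2) ltac:(lra)) as [d1 [Hd1 P1]].
  destruct (H2 t Ht (eps/2) ltac:(lra)) as [d2 [Hd2 P2]].
  exists (Rmin d1 d2); split. apply Rmin_pos; auto.
  intros s Hs Hst. pose proof (Rmin_l d1 d2). pose proof (Rmin_r d1 d2).
  specialize (P1 s Hs ltac:(lra)). specialize (P2 s Hs ltac:(lra)).
  pose proof (norm2_triang (vsub (c1 s) (c1 t)) (vopp (vsub (c2 s) (c2 t)))).
  rewrite norm2_opp in H3.
  replace (vadd (vsub (c1 s) (c1 t)) (vopp (vsub (c2 s) (c2 t)))) with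
    (vsub (vsub (c1 s) (c2 s)) (vsub (c1 t) (c2 t))) in H3
    by (generalize (c1 s) (c1 t) (c2 s) (c2 t); intros [] [] [] []; unfold vsub, vadd, vopp; simpl; f_equal; ring).
  lra.
Qed.

Lemma VI_eq a r x : V_I a r x = a / 2 * ((norm2 x + - r + -1 * Rabs (norm2 x + - r)) / 2) ^ 2.
Proof.
  unfold V_I. destruct (Rlt_dec (norm2 x) r).
  - rewrite Rabs_left by lra. f_equal. f_equal. field.
  - rewrite Rabs_right by lra. replace ((norm2 x + - r + -1 * (norm2 x + - r)) / 2) with 0 by field. ring.
Qed.

Lemma Vh_eq Om a r x : V_h Om a r x = a / 2 * ((signed_dist Om x + r / 2 + 1 * Rabs (signed_dist Om x + r/2)) / 2) ^ 2.
Proof.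
  unfold V_h. destruct (Rle_dec (signed_dist Om x) (- (r / 2))).
  - rewrite Rabs_left1 by lra. replace ((signed_dist Om x + r / 2 + 1 * - (signed_dist Om x + r / 2)) / 2) with 0 by field. ring.
  - rewrite Rabs_right by lra. f_equal. f_equal. field.
Qed.

Lemma cont_real_comp c F h : cont_nonneg c -> pcont F (c 0) -> continuity h ->
  continuity_pt (fun s => h (F (c (Rmax 0 s)))) 0.
Proof.
  intros Hc HF Hh.
  apply (continuity_pt_comp (fun s => F (c (Rmax 0 s))) h). apply cont_gen; auto. apply Hh.
Qed.

Lemma Phi_rc Om r_d a_I a_h N p v :
  (forall i, (i < N)%nat -> cont_nonneg (p i) /\ cont_nonneg (v i)) ->
  continuity_pt (fun s => Phi Om a_I a_h r_d N p v (Rmax 0 s)) 0.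
Proof.
  intros Hc. unfold Phi.
  apply (continuity_pt_mult (fun _ => /2)). apply continuity_pt_const; intros ? ?; reflexivity.
  set (l := seq 0 N).
  assert (Inl : forall j, In j l -> (j < N)%nat) by (intros j Hj; apply in_seq in Hj; lia).
  apply (sumL_cont l (fun i s => dot (v i (Rmax 0 s)) (v i (Rmax 0 s))
     + sumR_ne N i (fun j => V_I a_I r_d (vsub (p i (Rmax 0 s)) (p j (Rmax 0 s))))
     + 2 * V_h Om a_h r_d (p i (Rmax 0 s)))).
  intros i Hil. destruct (Hc i (Inl i Hil)) as [Cp Cv].
  apply (continuity_pt_plus (fun s => dot (v i (Rmax 0 s)) (v i (Rmax 0 s))
     + sumR_ne N i (fun j => V_I a_I r_d (vsub (p i (Rmax 0 s)) (p j (Rmax 0 s)))))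
     (fun s => 2 * V_h Om a_h r_d (p i (Rmax 0 s)))).
  apply (continuity_pt_plus (fun s => dot (v i (Rmax 0 s)) (v i (Rmax 0 s)))
     (fun s => sumR_ne N i (fun j => V_I a_I r_d (vsub (p i (Rmax 0 s)) (p j (Rmax 0 s)))))).
  - unfold dot.
    apply (continuity_pt_plus (fun s => fst (v i (Rmax 0 s)) * fst (v i (Rmax 0 s)))
                              (fun s => snd (v i (Rmax 0 s)) * snd (v i (Rmax 0 s)))).
    apply (continuity_pt_mult (fun s => fst (v i (Rmax 0 s))) (fun s => fst (v i (Rmax 0 s))));
      apply cont_gen; auto; apply pcont_fst.
    apply (continuity_pt_mult (fun s => snd (v i (Rmax 0 s))) (fun s => snd (v i (Rmax 0 s))));
      apply cont_gen; auto; apply pcont_snd.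
  - apply (sumL_cont l (fun j s => if Nat.eq_dec j i then 0 else V_I a_I r_d (vsub (p i (Rmax 0 s)) (p j (Rmax 0 s))))).
    intros j Hjl. destruct (Nat.eq_dec j i).
    + apply continuity_pt_const; intros ? ?; reflexivity.
    + apply (continuity_pt_ext (fun s => (fun r => a_I / 2 * ((r + - r_d + -1 * Rabs (r + - r_d)) / 2) ^ 2)
                 (norm2 ((fun s => vsub (p i s) (p j s)) (Rmax 0 s))))).
      intro s. rewrite VI_eq. reflexivity.
      apply (cont_real_comp (fun s => vsub (p i s) (p j s)) norm2 (fun r => a_I / 2 * ((r + - r_d + -1 * Rabs (r + - r_d)) / 2) ^ 2)). apply cont_nonneg_sub; auto. apply (Hc j (Inl j Hjl)).
      apply pcont_norm. intro; apply hcont.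
  - apply (continuity_pt_scal (fun s => V_h Om a_h r_d (p i (Rmax 0 s)))).
    apply (continuity_pt_ext (fun s => (fun r => a_h / 2 * ((r + r_d / 2 + 1 * Rabs (r + r_d / 2)) / 2) ^ 2)
                 (signed_dist Om (p i (Rmax 0 s))))).
    intro s. rewrite Vh_eq. reflexivity.
    apply (cont_real_comp (p i) (signed_dist Om) (fun r => a_h / 2 * ((r + r_d / 2 + 1 * Rabs (r + r_d / 2)) / 2) ^ 2)); auto. intros eps Heps. apply sd_cont; auto. intro; apply hcont.
Qed.


Lemma VI_ge0 a r x : 0 < a -> 0 <= V_I a r x.
Proof. intro; unfold V_I; destruct Rlt_dec; try lra. pose proof (pow2_ge_0 (norm2 x - r)). 
  apply Rmult_le_pos; lra. Qed.

Lemma Vh_ge0 Om a r x : 0 < a -> 0 <= V_h Om a r x.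
Proof. intro; unfold V_h; destruct Rle_dec; try lra. pose proof (pow2_ge_0 (signed_dist Om x + r / 2)).
  apply Rmult_le_pos; lra. Qed.

Lemma Phi_lb Om r_d a_I a_h N p v t i j : 0 < a_I -> 0 < a_h -> (i < N)%nat -> (j < N)%nat -> i <> j ->
  V_I a_I r_d (vsub (p i t) (p j t)) <= Phi Om a_I a_h r_d N p v t.
Proof.
  intros HaI Hah Hi Hj Hij. unfold Phi.
  set (l := seq 0 N).
  assert (Inl : forall k, (k < N)%nat -> In k l) by (intros k Hk; apply in_seq; lia).
  set (F := fun i => dot (v i t) (v i t)
     + sumR_ne N i (fun j => V_I a_I r_d (vsub (p i t) (p j t)))
     + 2 * V_h Om a_h r_d (p i t)).
  assert (Fnn : forall k, 0 <= sumR_ne N k (fun j => V_I a_I r_d (vsub (p k t) (p j t)))).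
  { intro k. apply (sumL_nonneg l). intros m _. destruct Nat.eq_dec; [lra| apply VI_ge0; auto]. }
  assert (Fpos : forall k, In k l -> 0 <= F k).
  { intros k _. unfold F. pose proof (dot_ge0 (v k t)). pose proof (Vh_ge0 Om a_h r_d (p k t) Hah).
    pose proof (Fnn k). lra. }
  assert (Fi : forall a b, (a < N)%nat -> (b < N)%nat -> a <> b -> V_I a_I r_d (vsub (p a t) (p b t)) <= F a).
  { intros a b Ha Hb Hab. unfold F.
    pose proof (dot_ge0 (v a t)). pose proof (Vh_ge0 Om a_h r_d (p a t) Hah).
    assert (V_I a_I r_d (vsub (p a t) (p b t)) <= sumR_ne N a (fun j => V_I a_I r_d (vsub (p a t) (p j t)))).
    { pose proof (sumL_ge_one l (fun m => if Nat.eq_dec m a then 0 else V_I a_I r_d (vsub (p a t) (p m t))) b).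
      simpl in H1. destruct (Nat.eq_dec b a); [congruence|]. apply H1; auto.
      intros m _. destruct Nat.eq_dec; [lra| apply VI_ge0; auto]. }
    lra. }
  pose proof (sumL_ge_two l F i j (seq_NoDup N 0) Fpos (Inl i Hi) (Inl j Hj) Hij).
  pose proof (Fi i j Hi Hj Hij). pose proof (Fi j i Hj Hi (not_eq_sym Hij)).
  rewrite <- (VI_opp a_I r_d (vsub (p j t) (p i t))) in H1.
  replace (vopp (vsub (p j t) (p i t))) with (vsub (p i t) (p j t)) in H1
    by (generalize (p i t) (p j t); intros [] []; unfold vsub, vadd, vopp; simpl; f_equal; ring).
  change (sumR N F) with (sumL l F). lra.
Qed.

Theorem proposition3
  (Om : pt -> Prop) (r_d a_I a_h a_v c_r : R) (N : nat)
  (p v : nat -> R -> pt) :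
  compact_domain Om ->
  0 < r_d -> 0 < a_I -> 0 < a_h -> 0 < a_v -> 0 < c_r ->
  c_r <= r_d ->
  (* trajectories are continuous on [0, +oo) *)
  (forall i, (i < N)%nat -> cont_nonneg (p i) /\ cont_nonneg (v i)) ->
  (* dynamics dp_i = v_i, dv_i = u_i with the (unthresholded) control law *)
  (forall i t, (i < N)%nat -> 0 < t ->
     curve_deriv (p i) t (v i t) /\
     exists (gI : nat -> pt) (gh : pt),
       (forall j, (j < N)%nat -> j <> i ->
          is_grad (V_I a_I r_d) (vsub (p i t) (p j t)) (gI j)) /\
       is_grad (V_h Om a_h r_d) (p i t) gh /\
       curve_deriv (v i) t
         (vsub (vsub (vopp (sumV_ne N i gI)) gh) (vscal a_v (v i t)))) ->
  Phi Om a_I a_h r_d N p v 0 < a_I / 2 * (c_r - r_d) ^ 2 ->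
  forall i j t, (i < N)%nat -> (j < N)%nat -> i <> j -> 0 <= t ->
    c_r < norm2 (vsub (p i t) (p j t)).
Proof.
  intros _ Hrd HaI Hah Hav Hcr Hcrd Hcont Hdyn H0 i j t Hi Hj Hij Ht.
  apply Rnot_le_lt; intro Hcol.
  set (Ph := Phi Om a_I a_h r_d N p v).
  assert (LB : a_I / 2 * (c_r - r_d) ^ 2 <= Ph t).
  { eapply Rle_trans; [| apply (Phi_lb Om r_d a_I a_h N p v t i j); auto].
    unfold V_I. pose proof (norm2_ge0 (vsub (p i t) (p j t))).
    destruct Rlt_dec.
    - apply Rmult_le_compat_l. lra.
      assert (0 <= (c_r - norm2 (vsub (p i t) (p j t))) * (2 * r_d - norm2 (vsub (p i t) (p j t)) - c_r))
        by (apply Rmult_le_pos; lra).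
      simpl. nra.
    - assert (c_r = r_d) by lra. subst. replace (r_d - r_d) with 0 by ring. lra. }
  destruct Ht as [Ht|Ht0]; [|subst; fold Ph in H0; lra].
  assert (Hd : forall c, exists D, 0 < c -> derivable_pt_lim Ph c D /\ D <= 0).
  { intro c. destruct (Rlt_dec 0 c) as [Hc|Hc].
    - destruct (Phi_deriv Om r_d a_I a_h a_v N p v c Hav Hc (fun i Hi => Hdyn i c Hi Hc)) as [D HD].
      exists D; auto.
    - exists 0; intro; lra. }
  apply functional_choice in Hd as [f' Hf'].
  assert (Mono : forall s, 0 < s < t -> Ph t <= Ph s).
  { intros s Hs. destruct (MVT_cor2 Ph f' s t) as [c [Hc1 Hc2]]. lra.
    intros c Hc. apply Hf'; lra.
    destruct (Hf' c ltac:(lra)) as [_ Hneg]. nra. }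
  pose proof (Phi_rc Om r_d a_I a_h N p v Hcont) as RC.
  assert (Ph t <= Ph 0).
  { apply Rnot_lt_le; intro Hlt.
    destruct (RC (Ph t - Ph 0) ltac:(lra)) as [alp [Halp P]].
    set (s := Rmin (alp / 2) (t / 2)).
    assert (Hs : 0 < s) by (apply Rmin_pos; lra).
    assert (H : s <= alp / 2) by apply Rmin_l. assert (H1 : s <= t / 2) by apply Rmin_r.
    specialize (P s). simpl in P. unfold R_dist in P.
    rewrite (Rmax_right 0 s), (Rmax_left 0 0) in P by lra.
    assert (Rabs (Ph s - Ph 0) < Ph t - Ph 0).
    { apply P. split. unfold D_x, no_cond; split; [exact I | apply Rlt_not_eq; exact Hs].
      rewrite Rminus_0_r, Rabs_right; lra. }
    pose proof (Mono s ltac:(lra)).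
    apply Rabs_def2 in H2. fold Ph in H2. lra. }
  fold Ph in H0. lra.
Qed.
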